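(* Let $n$ and $0<n_1<\cdots<n_d<n$ be integers with $m_1=n_1$, $m_k=n_k-n_{k-1}$ ($2\le k\le d$), $m_{d+1}=n-n_d$, and regard $\mathrm{Flag}(n_1,\dots,n_d;n)=\{(VJ_1V^{\mathsf T},\dots,VJ_{d+1}V^{\mathsf T}):V\in\mathrm{O}(n)\}$ as a submanifold of $(\mathbb{R}^{n\times n})^{d+1}$ with the Frobenius inner product. Let $V(t)$ be a differentiable curve in $\mathrm{O}(n)$, $\Lambda(t)=V(t)^{\mathsf T}\dot V(t)$, with $\Lambda(k,k)(t)\equiv0$ for $k=1,\dots,d+1$, and $c(t)=V(t)(J_1,\dots,J_{d+1})V(t)^{\mathsf T}$. Define \begin{align*} T_1(t)&=V(t)\big(\dot\Lambda J_1-J_1\dot\Lambda,\dots,\dot\Lambda J_{d+1}-J_{d+1}\dot\Lambda\big)V(t)^{\mathsf T},\\ T_2(t)&=V(t)\big(\Lambda^2J_1+J_1\Lambda^2,\dots,\Lambda^2J_{d+1}+J_{d+1}\Lambda^2\big)V(t)^{\mathsf T},\\ T_3(t)&=V(t)\big(\Lambda J_1\Lambda,\dots,\Lambda J_{d+1}\Lambda\big)V(t)^{\mathsf T}, \end{align*} with $\Lambda=\Lambda(t)$. Then (1) $T_1(t)\in\mathbb{T}_{c(t)}\mathrm{Flag}(n_1,\dots,n_d;n)$; (2) the orthogonal projection of $T_2(t)$ onto $\mathbb{T}_{c(t)}\mathrm{Flag}(n_1,\dots,n_d;n)$ is zero; (3) the orthogonal projection of $T_3(t)$ onto $\mathbb{T}_{c(t)}\mathrm{Flag}(n_1,\dots,n_d;n)$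 is zero.
   Context: $J_k=\operatorname{diag}(-I_{m_1},\dots,-I_{m_{k-1}},I_{m_k},-I_{m_{k+1}},\dots,-I_{m_{d+1}})$ for $k=1,\dots,d+1$. $V(X_1,\dots,X_{d+1})V^{\mathsf T}$ denotes $(VX_1V^{\mathsf T},\dots,VX_{d+1}V^{\mathsf T})$. For an $n\times n$ matrix $M$, $M(p,q)$ denotes its $(p,q)$ block in the partition $n=m_1+\cdots+m_{d+1}$. *)

(* Defs.v *)
From HB Require Import structures.
From mathcomp Require Import all_boot all_order all_algebra.
From mathcomp Require Import all_classical all_reals all_analysis.
Unset Printing Implicit Defensive.
Import Order.TTheory GRing.Theory Num.Theory.
Import numFieldNormedType.Exports.
Local Open Scope classical_set_scope.
Local Open Scope ring_scope.

Section FlagDefs.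
Variable R : realType.

Definition mx_derivable {m p : nat} (f : R -> 'M[R]_(m, p)) (t : R) : Prop :=
  forall i j, derivable (fun s => f s i j) t 1.

Definition mx_deriv {m p : nat} (f : R -> 'M[R]_(m, p)) (t : R) : 'M[R]_(m, p) :=
  \matrix_(i, j) derive1 (fun s => f s i j) t.

Definition ext (nn : nat -> nat) (d n : nat) (k : nat) : nat :=
  if k == 0%N then 0%N else if (k <= d)%N then nn k else n.

(* index i (0-based) lies in the block number k+1 (k : 0-based block index). *)
Definition in_block (nn : nat -> nat) (d n : nat) (k : nat) (i : nat) : bool :=
  (ext nn d n k <= i < ext nn d n k.+1)%N.

(* Jm k = J_{k+1} : diag(-I, .., -I, I_{m_{k+1}}, -I, .., -I). *)
Definition Jm (nn : nat -> nat) (d n : nat) (k : 'I_d.+1) : 'M[R]_n :=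
  \matrix_(i, j) (if i == j then (if in_block nn d n k i then 1 else -1) else 0).

Definition orthmx {n : nat} (V : 'M[R]_n) : Prop := V^T *m V = 1%:M.

Definition Flag (nn : nat -> nat) (d n : nat) : set ('I_d.+1 -> 'M[R]_n) :=
  [set c | exists V : 'M[R]_n, orthmx V /\
     forall k, c k = V *m Jm nn d n k *m V^T].

Definition tangent_space {d n : nat} (S : set ('I_d.+1 -> 'M[R]_n))
    (c : 'I_d.+1 -> 'M[R]_n) : set ('I_d.+1 -> 'M[R]_n) :=
  [set T | exists g : R -> ('I_d.+1 -> 'M[R]_n),
     (forall s, S (g s)) /\ g 0 = c /\
     forall k, mx_derivable (fun s => g s k) 0 /\ mx_deriv (fun s => g s k) 0 = T k].

Definition frob {n : nat} (A B : 'M[R]_n) : R := \sum_i \sum_j A i j * B i j.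
Definition tinner {d n : nat} (X Y : 'I_d.+1 -> 'M[R]_n) : R :=
  \sum_k frob (X k) (Y k).

Definition is_orth_proj {d n : nat} (S : set ('I_d.+1 -> 'M[R]_n))
    (x p : 'I_d.+1 -> 'M[R]_n) : Prop :=
  S p /\ forall y, S y -> tinner (fun k => x k - p k) y = 0.

End FlagDefs.
Arguments mx_derivable {R m p}.
Arguments mx_deriv {R m p}.
Arguments orthmx {R n}.
Arguments frob {R n}.
Arguments tinner {R d n}.
Arguments is_orth_proj {R d n}.
Arguments tangent_space {R d n}.

(* Main.v *)
Require Import Defs.
From HB Require Import structures.
From mathcomp Require Import all_boot all_order all_algebra.
From mathcomp Require Import all_classical all_reals all_analysis.
From mathcomp Require Import zify ring lra.
Import Order.TTheory GRing.Theory Num.Theory.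
Local Open Scope classical_set_scope.
Local Open Scope ring_scope.



Section Aux.
Variable R : realType.

Definition mxD {m p : nat} (F : R -> 'M[R]_(m, p)) (t : R) (D : 'M[R]_(m, p)) :=
  forall i j, is_derive t (1:R) (fun s => F s i j) (D i j).

Lemma is_derive_eq (f : R -> R) (t a b : R) : is_derive t 1 f a -> a = b -> is_derive t 1 f b.
Proof. by move=> H <-. Qed.

Lemma mxD_sound m p (F : R -> 'M[R]_(m, p)) t D :
  mxD F t D -> mx_derivable F t /\ mx_deriv F t = D.
Proof.
move=> H; split; first by move=> i j; exact: (@ex_derive _ _ _ _ _ _ _ (H i j)).
apply/matrixP => i j; rewrite mxE derive1E; exact: (@derive_val _ _ _ _ _ _ _ (H i j)).
Qed.

Lemma mxD_of m p (F : R -> 'M[R]_(m, p)) t :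
  mx_derivable F t -> mxD F t (mx_deriv F t).
Proof. by move=> H i j; rewrite mxE derive1E; apply: derivableP. Qed.

Lemma mxD_uniq m p (F : R -> 'M[R]_(m, p)) t D1 D2 :
  mxD F t D1 -> mxD F t D2 -> D1 = D2.
Proof.
move=> H1 H2; apply/matrixP => i j.
by rewrite -(@derive_val _ _ _ _ _ _ _ (H1 i j)) (@derive_val _ _ _ _ _ _ _ (H2 i j)).
Qed.

Lemma mxD_cst m p (M : 'M[R]_(m, p)) t : mxD (fun _ => M) t 0.
Proof. by move=> i j; rewrite mxE; exact: is_derive_cst. Qed.

Lemma mxD_add m p (F G : R -> 'M[R]_(m, p)) t A B :
  mxD F t A -> mxD G t B -> mxD (fun s => F s + G s) t (A + B).
Proof.
move=> HA HB i j; rewrite mxE.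
have -> : (fun s => (F s + G s) i j) = (fun s => F s i j) + (fun s => G s i j).
  by apply/funext => s; rewrite /= mxE.
exact: is_deriveD.
Qed.

Lemma mxD_opp m p (F : R -> 'M[R]_(m, p)) t A :
  mxD F t A -> mxD (fun s => - F s) t (- A).
Proof.
move=> HA i j; rewrite mxE.
have -> : (fun s => (- F s) i j) = - (fun s => F s i j).
  by apply/funext => s; rewrite /= mxE.
exact: is_deriveN.
Qed.

Lemma mxD_tr m p (F : R -> 'M[R]_(m, p)) t A :
  mxD F t A -> mxD (fun s => (F s)^T) t A^T.
Proof.
move=> HA i j; rewrite mxE.
have -> : (fun s => ((F s)^T) i j) = (fun s => F s j i).
  by apply/funext => s; rewrite mxE.
exact: HA.
Qed.

Lemma mxD_mul m p q (F : R -> 'M[R]_(m, p)) (G : R -> 'M[R]_(p, q)) t A B :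
  mxD F t A -> mxD G t B -> mxD (fun s => F s *m G s) t (A *m G t + F t *m B).
Proof.
move=> HA HB i j.
have -> : (fun s => (F s *m G s) i j) =
   \sum_(l < p) ((fun s => F s i l) * (fun s => G s l j)).
  by apply/funext => s; rewrite mxE fct_sumE.
apply: is_derive_eq; first by apply: is_derive_sum => l; exact: is_deriveM.
rewrite !mxE -big_split /=; apply: eq_bigr => l _.
by rewrite /GRing.scale /= addrC [G t l j * _]mulrC.
Qed.

Lemma mxD_sum m p N (F : 'I_N -> R -> 'M[R]_(m, p)) t A :
  (forall k, mxD (F k) t (A k)) -> mxD (fun s => \sum_k F k s) t (\sum_k A k).
Proof.
move=> HA i j.
have -> : (fun s => (\sum_k F k s) i j) = \sum_k (fun s => F k s i j).
  by apply/funext => s; rewrite fct_sumE summxE.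
apply: is_derive_eq; first by apply: is_derive_sum => k; exact: HA.
by rewrite summxE.
Qed.

End Aux.
Arguments mxD {R m p}.
Arguments is_derive_eq {R f t a b}.
Arguments mxD_sound {R m p F t D}.
Arguments mxD_of {R m p F t}.
Arguments mxD_uniq {R m p F t D1 D2}.
Arguments mxD_cst {R m p}.
Arguments mxD_add {R m p F G t A B}.
Arguments mxD_opp {R m p F t A}.
Arguments mxD_tr {R m p F t A}.
Arguments mxD_mul {R m p q F G t A B}.
Arguments mxD_sum {R m p N F t A}.



Section Blocks.
Variable R : realType.
Variables (nn : nat -> nat) (d n : nat).
Hypothesis hnn : forall k : nat, (k <= d)%N -> (ext nn d n k < ext nn d n k.+1)%N.

Lemma ext_mono a b : (a <= b)%N -> (b <= d.+1)%N -> (ext nn d n a <= ext nn d n b)%N.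
Proof.
elim: b => [|b IH]; first by rewrite leqn0 => /eqP ->.
rewrite leq_eqVlt => /orP [/eqP -> //| ab] bd.
apply: (leq_trans (IH ab (ltnW bd))); apply: ltnW; exact: hnn.
Qed.

Lemma ext_top : ext nn d n d.+1 = n.
Proof. by rewrite /ext /= ltnn. Qed.

Lemma block_uniq (k l : 'I_d.+1) (i : nat) :
  in_block nn d n k i -> in_block nn d n l i -> k = l.
Proof.
rewrite /in_block => /andP [k1 k2] /andP [l1 l2].
apply/val_inj/eqP; rewrite eqn_leq; apply/andP; split; rewrite leqNgt; apply/negP => H.
- have := @ext_mono l.+1 k H (ltnW (ltn_ord k)); lia.
- have := @ext_mono k.+1 l H (ltnW (ltn_ord l)); lia.
Qed.

Lemma block_ex (i : 'I_n) : exists k : 'I_d.+1, in_block nn d n k i.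
Proof.
suff H : forall m, (m <= d.+1)%N -> forall i, (i < ext nn d n m)%N ->
   exists k, (k < m)%N /\ in_block nn d n k i.
  have [|k [km kb]] := H d.+1 (leqnn _) i; first by rewrite ext_top.
  by exists (Ordinal km).
elim => [|m IH] md j; first by rewrite /ext /=.
case: (ltnP j (ext nn d n m)) => jm jm1.
  by have [k [k1 k2]] := IH (ltnW md) j jm; exists k; split => //; lia.
by exists m; split => //; rewrite /in_block jm jm1.
Qed.

Definition Ed (k : 'I_d.+1) : 'M[R]_n :=
  diag_mx (\row_(i < n) (in_block nn d n k i)%:R).

Lemma Jm_E k : Jm R nn d n k = 2%:R *: Ed k - 1%:M.
Proof.
apply/matrixP => i j; rewrite /Jm !mxE.
case: (eqVneq i j) => [->|ij]; last by rewrite mulr0n subr0 mulr0.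
by case: (in_block nn d n k j); rewrite /= ?mulr1n ?mulr0n ?mulr1 ?mulr0 ?sub0r //; lra.
Qed.

Lemma Ed_tr k : (Ed k)^T = Ed k.
Proof. exact: tr_diag_mx. Qed.

Lemma Ed_idem k : Ed k *m Ed k = Ed k.
Proof.
rewrite /Ed mul_diag_mx; apply/matrixP => i j; rewrite !mxE.
by case: (in_block nn d n k i); rewrite ?mul1r ?mul0r ?mul0rn.
Qed.

Lemma J_tr k : (Jm R nn d n k)^T = Jm R nn d n k.
Proof. by rewrite Jm_E linearB linearZ /= Ed_tr trmx1. Qed.

Lemma J_sq k : Jm R nn d n k *m Jm R nn d n k = 1%:M.
Proof.
rewrite Jm_E mulmxBl !mulmxBr !mulmx1 mul1mx -!scalemxAl -!scalemxAr Ed_idem.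
apply/matrixP => i j; rewrite !mxE; ring.
Qed.

Lemma sum_Ed : \sum_k Ed k = 1%:M.
Proof.
apply/matrixP => i j; rewrite summxE !mxE.
have [k0 hk0] := block_ex i.
rewrite (bigD1 k0) //= big1 ?addr0.
  by rewrite !mxE hk0.
move=> k kk0; rewrite !mxE.
case hb: (in_block nn d n k i); last by rewrite mul0rn.
by rewrite (@block_uniq k k0 i hb hk0) eqxx in kk0.
Qed.

Lemma sum_J : \sum_k Jm R nn d n k = (2%:R - d.+1%:R) *: 1%:M.
Proof.
under eq_bigr do rewrite Jm_E.
rewrite sumrB -scaler_sumr sum_Ed sumr_const card_ord scalerBl.
by rewrite !scaler_nat.
Qed.

Lemma ELE (k : 'I_d.+1) (A : 'M[R]_n) :
  (forall i j : 'I_n, in_block nn d n k i -> in_block nn d n k j -> A i j = 0) ->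
  Ed k *m A *m Ed k = 0.
Proof.
move=> hA; rewrite /Ed mul_diag_mx mul_mx_diag; apply/matrixP => i j; rewrite !mxE.
case hi: (in_block nn d n k i); case hj: (in_block nn d n k j);
  rewrite ?mul0r ?mulr0 //.
by rewrite hA ?mulr0 ?mul0r.
Qed.

End Blocks.



Section Giv.
Variable R : realType.

Lemma is_derive_scale (h : R -> R) (y t a : R) :
  is_derive (t * y) 1 h a -> is_derive t 1 (fun s => h (s * y)) (a * y).
Proof.
move=> H.
have df : derivable (fun s : R => s * y) t 1.
  have -> : (fun s : R => s * y) = (@id R) * (cst y) by [].
  apply: derivableM; [exact: derivable_id | exact: derivable_cst].
have dh : derivable h (t * y) 1 by exact: ex_derive.
apply: DeriveDef.
  have df' := (derivable1_diffP _ _).1 df.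
  have dh' := (derivable1_diffP _ _).1 dh.
  have := differentiable_comp df' dh'.
  by move/derivable1_diffP.
rewrite -derive1E (derive1_comp (f:=fun s => s * y) (g:=h)) //.
rewrite derive1E derive_val; congr (_ * _).
rewrite (derive1Mr (f:=id)) ?derive1_id ?mul1r //.
Qed.


Variable n : nat.
Variables p q : 'I_n.
Hypothesis pq : p != q.

Definition Pm : 'M[R]_n := delta_mx p p + delta_mx q q.
Definition Km : 'M[R]_n := delta_mx p q - delta_mx q p.

Let qp : q != p. Proof. by rewrite eq_sym. Qed.

Ltac dsimp := rewrite /Pm /Km ?mulmxDl ?mulmxDr ?mulmxBl ?mulmxBr ?mulmxN ?mulNmx
   !mul_delta_mx_cond ?eqxx ?(negPf pq) ?(negPf qp) ?mulr0n ?mulr1n;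
   rewrite ?addr0 ?add0r ?subr0 ?sub0r ?opprD ?opprK ?addrA ?addr0; try done.

Lemma PP : Pm *m Pm = Pm. Proof. dsimp. Qed.
Lemma PK : Pm *m Km = Km. Proof. dsimp. Qed.
Lemma KP : Km *m Pm = Km. Proof. dsimp. Qed.
Lemma KK : Km *m Km = - Pm. Proof. dsimp. Qed.
Lemma Ptr : Pm^T = Pm. Proof. by rewrite /Pm linearD /= !trmx_delta. Qed.
Lemma Ktr : Km^T = - Km. Proof. by rewrite /Km linearB /= !trmx_delta opprB. Qed.

Definition Giv (th : R) : 'M[R]_n := 1%:M + (cos th - 1) *: Pm + sin th *: Km.

Lemma Giv_orth th : orthmx (Giv th).
Proof.
rewrite /orthmx.
have -> : (Giv th)^T = 1%:M + (cos th - 1) *: Pm - sin th *: Km.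
  rewrite /Giv 2!linearD 2!linearZ /= trmx1 Ptr Ktr.
  by rewrite scalerN.
rewrite /Giv.
set a := cos th - 1; set b := sin th.
rewrite !mulmxDl !mulmxDr !mul1mx !mulmx1 -!scalemxAl -!scalemxAr.
rewrite ?mulNmx ?mulmxN ?scalerN ?mulmx1 ?mul1mx -?scalemxAl -?scalemxAr PP PK KP KK.
apply: (@etrans _ _ (1%:M + (2 * a + a ^+ 2 + b ^+ 2) *: Pm)).
  clearbody a b; apply/matrixP => i j; rewrite !mxE.
  move: ((i == j)%:R : R) (((i == p) && (j == p))%:R : R) (((i == q) && (j == q))%:R : R) (((i == p) && (j == q))%:R : R) (((i == q) && (j == p))%:R : R) => *; ring.
rewrite (_ : 2 * a + a ^+ 2 + b ^+ 2 = 0) ?scale0r ?addr0 //.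
rewrite /a /b (_ : _ + _ + _ = cos th ^+ 2 + sin th ^+ 2 - 1); first by rewrite cos2Dsin2 subrr.
by ring.
Qed.

Lemma Giv0 : Giv 0 = 1%:M.
Proof. by rewrite /Giv cos0 sin0 subrr !scale0r !addr0. Qed.

Lemma Giv_der (y : R) : mxD (fun s => Giv (s * y)) 0 (y *: Km).
Proof.
move=> i j.
have -> : (fun s => Giv (s * y) i j) =
  cst ((1%:M : 'M[R]_n) i j) + ((fun s => cos (s * y)) - cst 1) * cst (Pm i j)
  + (fun s => sin (s * y)) * cst (Km i j).
  by apply/funext => s; rewrite /Giv !mxE.
have hc : is_derive (0:R) (1:R) (fun s => cos (s * y)) (- sin (0 * y) * y).
  by apply: is_derive_scale; exact: is_derive_cos.
have hs : is_derive (0:R) (1:R) (fun s => sin (s * y)) (cos (0 * y) * y).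
  by apply: is_derive_scale; exact: is_derive_sin.
apply: is_derive_eq.
rewrite [RHS]mxE mul0r sin0 cos0 /GRing.scale /=; ring.
Qed.

End Giv.
Arguments Pm {R n}.
Arguments Km {R n}.
Arguments Giv {R n}.
Arguments Giv_orth {R n p q}.
Arguments Giv0 {R n}.
Arguments Giv_der {R n p q}.

Section Ach.
Variable R : realType.
Variable n : nat.

Definition ach (X : 'M[R]_n) := exists W : R -> 'M[R]_n,
  (forall s, orthmx (W s)) /\ W 0 = 1%:M /\ mxD W 0 X.

Lemma ach0 : ach 0.
Proof.
exists (fun _ => 1%:M); split; [|split] => //.
  by move=> s; rewrite /orthmx trmx1 mulmx1.
exact: mxD_cst.
Qed.

Lemma achD X Y : ach X -> ach Y -> ach (X + Y).
Proof.
move=> [W1 [Ho1 [He1 Hd1]]] [W2 [Ho2 [He2 Hd2]]].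
exists (fun s => W1 s *m W2 s); split; [|split].
- move=> s; rewrite /orthmx trmx_mul mulmxA -(mulmxA _ _ (W1 s)) (Ho1 s) mulmx1.
  exact: Ho2.
- by rewrite He1 He2 mulmx1.
- have := mxD_mul Hd1 Hd2; by rewrite He1 He2 mulmx1 mul1mx.
Qed.

Lemma ach_giv (p q : 'I_n) (y : R) : p != q -> ach (y *: Km p q).
Proof.
move=> pq; exists (fun s => Giv p q (s * y)); split; [|split].
- move=> s; exact: Giv_orth.
- by rewrite mul0r Giv0.
- exact: Giv_der.
Qed.

Lemma skew_decomp (X : 'M[R]_n) : X^T = - X ->
  X = \sum_p \sum_q (X p q / 2) *: Km p q.
Proof.
move=> sk.
have hT : X^T = \sum_(p < n) \sum_(q < n) X p q *: delta_mx q p.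
  rewrite {1}(matrix_sum_delta X^T) exchange_big /=.
  by apply: eq_bigr => p _; apply: eq_bigr => q _; rewrite mxE.
have e : \sum_(p < n) \sum_(q < n) (X p q / 2) *: Km p q =
    2^-1 *: (X - X^T).
  rewrite hT {2}(matrix_sum_delta X) -sumrB scaler_sumr.
  apply: eq_bigr => p _; rewrite -sumrB scaler_sumr; apply: eq_bigr => q _.
  by rewrite /Km -scalerBr scalerA mulrC.
rewrite e sk opprK; apply/matrixP => i j; rewrite !mxE; by field.
Qed.

Lemma ach_skew (X : 'M[R]_n) : X^T = - X -> ach X.
Proof.
move=> /skew_decomp ->.
apply: (big_ind ach ach0 achD) => p _.
apply: (big_ind ach ach0 achD) => q _.
case: (eqVneq p q) => [<-|pq]; last exact: ach_giv.
by rewrite /Km subrr scaler0; exact: ach0.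
Qed.

End Ach.



Section Tr.
Variable R : realType.
Variable n : nat.
Implicit Types (A B L J E Y U M : 'M[R]_n).

Lemma frob_tr A B : frob A B = \tr (A^T *m B).
Proof.
rewrite /frob /mxtrace exchange_big /=; apply: eq_bigr => j _.
rewrite mxE; apply: eq_bigr => i _; by rewrite mxE.
Qed.

Lemma key_tr U M Y : \tr ((U *m M *m U^T)^T *m Y) = \tr (M^T *m (U^T *m Y *m U)).
Proof.
rewrite !trmx_mul trmxK -!mulmxA mxtrace_mulC -!mulmxA; done.
Qed.

Lemma anti U Y J : U^T *m U = 1%:M ->
  Y *m (U *m J *m U^T) + (U *m J *m U^T) *m Y = 0 ->
  (U^T *m Y *m U) *m J + J *m (U^T *m Y *m U) = 0.
Proof.
move=> hU h.
have := congr1 (fun Z => U^T *m Z *m U) h.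
rewrite mulmx0 mul0mx => <-.
rewrite mulmxDr mulmxDl !mulmxA hU mul1mx -!mulmxA hU mulmx1.
by rewrite !mulmxA.
Qed.

Lemma tr2 L J Y : L^T = - L -> J^T = J -> Y *m J + J *m Y = 0 ->
  \tr ((L *m L *m J + J *m (L *m L))^T *m Y) = 0.
Proof.
move=> hL hJ hY.
rewrite linearD /= !trmx_mul hJ hL !(mulNmx, mulmxN, opprK).
rewrite mulmxDl mxtraceD -!mulmxA (mxtrace_mulC J) -!mulmxA -mxtraceD -!mulmxDr.
by rewrite hY !mulmx0 mxtrace0.
Qed.

Lemma tr3 L E Y : L^T = - L -> E^T = E -> E *m L *m E = 0 ->
  Y *m (2%:R *: E - 1%:M) + (2%:R *: E - 1%:M) *m Y = 0 ->
  \tr ((L *m (2%:R *: E - 1%:M) *m L)^T *m Y) = - \tr (L *m L *m Y).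
Proof.
move=> hL hE hELE hY.
have hY' : Y = Y *m E + E *m Y.
  move: hY; rewrite mulmxBr mulmxBl mulmx1 mul1mx -scalemxAr -scalemxAl.
  move/matrixP=> h; apply/matrixP => i j; move: (h i j).
  rewrite !mxE => h'; lra.
rewrite !trmx_mul hL linearB linearZ /= hE trmx1 !(mulNmx, mulmxN, opprK).
rewrite mulmxBl mul1mx -scalemxAl mulmxBr -scalemxAr mulmxBl -scalemxAl.
rewrite linearB linearZ /=.
rewrite (_ : \tr (L *m (E *m L) *m Y) = 0) ?mulr0 ?add0r //.
rewrite {1}hY' mulmxDr mxtraceD.
rewrite mxtrace_mulC -!mulmxA (mulmxA E L) (mulmxA (E *m L) E) hELE.
rewrite !(mul0mx, mulmx0) mxtrace0.
by rewrite (mulmxA E L) (mulmxA (E *m L) E) hELE !(mul0mx, mulmx0) mxtrace0 addr0.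
Qed.
End Tr.

Lemma mxD_conj (R : realType) (n : nat) (U M : 'M[R]_n) (W : R -> 'M[R]_n) X :
  W 0 = 1%:M -> mxD W 0 X ->
  mxD (fun s => U *m W s *m M *m (W s)^T *m U^T) 0 (U *m (X *m M + M *m X^T) *m U^T).
Proof.
move=> W0 HW.
have h := mxD_mul (mxD_mul (mxD_mul (mxD_mul (mxD_cst U _) HW) (mxD_cst M _)) (mxD_tr HW))
   (mxD_cst U^T _).
move: h; rewrite W0 trmx1 !(mulmx1, mulmx0, mul0mx, addr0, add0r).
suff -> : U *m (X *m M + M *m X^T) *m U^T = (U *m X *m M + U *m M *m X^T) *m U^T by [].
by rewrite mulmxDr !mulmxA.
Qed.

Theorem lemma4p5 (R : realType) (n d : nat) (nn : nat -> nat)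
  (hnn : forall k : nat, (k <= d)%N -> (ext nn d n k < ext nn d n k.+1)%N)
  (V : R -> 'M[R]_n)
  (hVO : forall s, orthmx (V s))
  (hVd : forall s, mx_derivable V s)
  (t : R)
  (hLd : mx_derivable (fun s => (V s)^T *m mx_deriv V s) t)
  (hLblk : forall s (k : 'I_d.+1) (i j : 'I_n), in_block nn d n k i ->
      in_block nn d n k j -> ((V s)^T *m mx_deriv V s) i j = 0) :
  let Lam := (V t)^T *m mx_deriv V t in
  let dLam := mx_deriv (fun s => (V s)^T *m mx_deriv V s) t in
  let J := Jm R nn d n in
  let c := fun k => V t *m J k *m (V t)^T in
  let T1 := fun k => V t *m (dLam *m J k - J k *m dLam) *m (V t)^T in
  let T2 := fun k => V t *m (Lam *m Lam *m J k + J k *m (Lam *m Lam)) *m (V t)^T in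
  let T3 := fun k => V t *m (Lam *m J k *m Lam) *m (V t)^T in
  let TS := tangent_space (Flag R nn d n) c in
  [/\ TS T1, is_orth_proj TS T2 (fun _ => 0) & is_orth_proj TS T3 (fun _ => 0)].
Proof.
move=> Lam dLam J c T1 T2 T3 TS.
have hU : (V t)^T *m V t = 1%:M := hVO t.
have hU' : V t *m (V t)^T = 1%:M := mulmx1C hU.
have Lsk : forall s, ((V s)^T *m mx_deriv V s)^T = - ((V s)^T *m mx_deriv V s).
  move=> s.
  have h1 := mxD_mul (mxD_tr (mxD_of (hVd s))) (mxD_of (hVd s)).
  have h2 : mxD (fun r => (V r)^T *m V r) s 0.
    rewrite (_ : (fun r => _) = fun _ => 1%:M); first exact: mxD_cst.
    by apply/funext => r; exact: hVO.
  have := mxD_uniq h1 h2.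
  rewrite trmx_mul trmxK => /eqP; rewrite addr_eq0 => /eqP.
  done.
have dsk : dLam^T = - dLam.
  have h1 := mxD_tr (mxD_of hLd).
  have h2 : mxD (fun s => ((V s)^T *m mx_deriv V s)^T) t (- dLam).
    rewrite (_ : (fun s => _) = fun s => - ((V s)^T *m mx_deriv V s)).
      exact: mxD_opp (mxD_of hLd).
    by apply/funext => s; exact: Lsk.
  exact: mxD_uniq h1 h2.
have LamS : Lam^T = - Lam := Lsk t.
have TS0 : TS (fun _ => 0).
  exists (fun _ => c); split; [|split] => //.
    by move=> s; exists (V t); split.
  by move=> k; apply: mxD_sound; exact: mxD_cst.
have TSf : forall y, TS y ->
    (forall k, ((V t)^T *m y k *m V t) *m J k + J k *m ((V t)^T *m y k *m V t) = 0)
    /\ \sum_k y k = 0.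
  move=> y [g [gF [g0 gd]]].
  have dk : forall k, mxD (fun s => g s k) 0 (y k).
    by move=> k; have [h1 h2] := gd k; rewrite -h2; exact: mxD_of h1.
  split.
    move=> k; apply: anti => //.
    have sq : forall s, g s k *m g s k = 1%:M.
      move=> s; have [W [oW eW]] := gF s; rewrite eW !mulmxA.
      rewrite -(mulmxA (W *m J k) W^T W) oW mulmx1 -(mulmxA W (J k) (J k)).
      by rewrite J_sq mulmx1 (mulmx1C oW).
    have h1 := mxD_mul (dk k) (dk k).
    have h2 : mxD (fun s => g s k *m g s k) 0 0.
      rewrite (_ : (fun s => _) = fun _ => 1%:M); first exact: mxD_cst.
      by apply/funext => s; exact: sq.
    by have := mxD_uniq h1 h2; rewrite g0.
  have sm : forall s, \sum_k g s k = (2%:R - d.+1%:R) *: 1%:M.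
    move=> s; have [W [oW eW]] := gF s.
    under eq_bigr do rewrite eW.
    rewrite -mulmx_suml -mulmx_sumr (sum_J R nn d n hnn) -scalemxAr -scalemxAl mulmx1.
    by rewrite (mulmx1C oW).
  have h1 := mxD_sum dk.
  have h2 : mxD (fun s => \sum_k g s k) 0 0.
    rewrite (_ : (fun s => _) = fun _ => (2%:R - d.+1%:R) *: 1%:M); first exact: mxD_cst.
    by apply/funext => s; exact: sm.
  exact: mxD_uniq h1 h2.
split.
- have [W [oW [W0 dW]]] := @ach_skew _ _ _ dsk.
  exists (fun s k => V t *m W s *m J k *m (W s)^T *m (V t)^T); split; [|split].
  + move=> s; exists (V t *m W s); split.
      rewrite /orthmx trmx_mul -mulmxA (mulmxA (V t)^T) hU mul1mx; exact: oW.
    by move=> k; rewrite trmx_mul !mulmxA.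
  + by apply/funext => k; rewrite W0 trmx1 !mulmx1.
  + move=> k; apply: mxD_sound.
    have := @mxD_conj _ _ (V t) (J k) _ _ W0 dW; rewrite dsk mulmxN.
    done.
- split => // y Ty; have [an _] := TSf y Ty.
  rewrite /tinner big1 // => k _.
  rewrite subr0 frob_tr /T2 key_tr; apply: tr2 => //; exact: J_tr.
- split => // y Ty; have [an sm] := TSf y Ty.
  have e : forall k, frob (T3 k - 0) (y k) =
      - \tr (Lam *m Lam *m ((V t)^T *m y k *m V t)).
    move=> k; rewrite subr0 frob_tr /T3 key_tr.
    have := an k; rewrite /J Jm_E => ank.
    apply: tr3 => //; first exact: Ed_tr.
    by apply: ELE => i j; exact: hLblk.
  rewrite /tinner (eq_bigr _ (fun k _ => e k)) sumrN -raddf_sum /=.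
  by rewrite -mulmx_sumr -mulmx_suml -mulmx_sumr sm mulmx0 mul0mx mulmx0 mxtrace0 oppr0.
Qed.
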